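(* Let $q$ be a power of the prime $p$, $n\ge 2$ and $1\le i\le n$. If $\alpha$ is a root of $s_{n,i}(t)$ in an algebraic closure of $\mathbb{F}_q$ whose multiplicity $m$ satisfies $\gcd(m,p)=1$, then $\alpha\in\mathbb{F}_{q^n}$.
   Context: For a prime power $q$ and integers $n\ge 1$, $0\le i\le n$, the $i$-th $(n,q)$-elementary symmetric polynomial is $s_{n,i}(t)=\sum_{0\le j_1<j_2<\dots<j_i\le n-1} t^{q^{j_1}+q^{j_2}+\dots+q^{j_i}}\in\mathbb{F}_p[t]$ (where $p$ is the characteristic of $\mathbb{F}_q$). By convention $s_{n,0}(t)=1$. *)

(* Defs.v *)
From mathcomp Require Import all_boot all_order all_algebra.
Set Implicit Arguments. Unset Strict Implicit. Unset Printing Implicit Defensive.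
Import GRing.Theory.
Local Open Scope ring_scope.

(* The i-th (n,q)-elementary symmetric polynomial
   s_{n,i}(t) = sum_{0 <= j_1 < ... < j_i <= n-1} t^(q^j_1 + ... + q^j_i),
   with coefficients in an arbitrary ring R (all coefficients are the
   integer 1, so this is the image of the F_p-polynomial in any ring of
   characteristic p). *)
Definition s_nqi (R : nzSemiRingType) (n q i : nat) : {poly R} :=
  \sum_(S : {set 'I_n} | #|S| == i) 'X^(\sum_(j in S) q ^ (val j))%N.

(* Main.v *)
Require Import Defs.
From mathcomp Require Import all_boot all_order all_algebra.
From mathcomp Require Import zify.
Import GRing.Theory.
Local Open Scope ring_scope.

Lemma sum_ind_nat {T : finType} (S : {pred T}) (l : T) (x : nat) :
  (\sum_(j in S) (if j == l then x else 0) = if l \in S then x else 0)%N.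
Proof.
case: (boolP (l \in S)) => lS.
  rewrite (bigD1 l) //= eqxx big1 ?addn0 // => j /andP[_ /negbTE ->] //.
by rewrite big1 // => j jS; case: eqP => // Ej; rewrite -Ej jS in lS.
Qed.

Lemma sum_ind_r (V : nmodType) {T : finType} (S : {pred T}) (l : T) (x : V) :
  \sum_(j in S) (if j == l then x else 0) = if l \in S then x else 0.
Proof.
case: (boolP (l \in S)) => lS.
  rewrite (bigD1 l) //= eqxx big1 ?addr0 // => j /andP[_ /negbTE ->] //.
by rewrite big1 // => j jS; case: eqP => // Ej; rewrite -Ej jS in lS.
Qed.

Definition eS {n : nat} (q : nat) (S : {set 'I_n}) := (\sum_(j in S) q ^ val j)%N.

Lemma e_rot (n q : nat) (S : {set 'I_n.+1}) :
  (eS q (@ordS n.+1 @: S) + (ord_max \in S) * q ^ n.+1 =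
   q * eS q S + (ord_max \in S))%N.
Proof.
rewrite /eS big_imset /=; last by move=> x y _ _; apply: (@ordS_inj n.+1).
have h1 := sum_ind_nat S ord_max (q ^ n.+1).
have h2 := sum_ind_nat S ord_max 1.
rewrite -[((ord_max \in S) * _)%N]/((ord_max \in S) * q ^ n.+1)%N.
have -> : ((ord_max \in S) * q ^ n.+1 = if ord_max \in S then q ^ n.+1 else 0)%N.
  by case: (ord_max \in S); rewrite ?mul1n.
have -> : (nat_of_bool (ord_max \in S) = if ord_max \in S then 1 else 0)%N.
  by case: (ord_max \in S).
rewrite -h1 -h2 big_distrr /= -!big_split /=.
apply: eq_bigr => j _.
case: eqP => [->|/eqP jn].
  by rewrite /= modnn expn0 expnS addnC.
have jlt : (j < n)%N.
  by rewrite ltn_neqAle -ltnS ltn_ord andbT; apply: contra jn => /eqP E; apply/eqP/val_inj.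
by rewrite /= modn_small ?ltnS // expnS !addn0.
Qed.

Lemma f_rot (n q : nat) (S : {set 'I_n.+1}) : (0 < q)%N ->
  ((if ord0 \in @ordS n.+1 @: S then q ^ n.+1 + eS q (@ordS n.+1 @: S) - 1
   else eS q (@ordS n.+1 @: S)) = q * eS q S)%N.
Proof.
move=> q0.
have E0 : (ord0 : 'I_n.+1) = ordS ord_max by apply: val_inj; rewrite /= modnn.
rewrite E0 mem_imset; last exact: (@ordS_inj n.+1).
have := @e_rot n q S.
case: (ord_max \in S) => /=; last by rewrite !addn0.
rewrite mul1n addn1 => E; lia.
Qed.

Lemma frob_sum (R : comNzRingType) (I : Type) (r : seq I) (P : pred I) (F : I -> R) (q : nat) :
  [pchar R].-nat q ->
  (\sum_(x <- r | P x) F x) ^+ q = \sum_(x <- r | P x) F x ^+ q.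
Proof.
move=> hq.
have q0 : (0 < q)%N by case/andP: hq. 
apply: (big_morph (fun x => x ^+ q)) => [x y|]; first exact: exprDn_pchar.
rewrite expr0n; have -> : (q == 0%N) = false by lia. by [].
Qed.

Lemma natr_eS (R : nzRingType) (p k n : nat) (S : {set 'I_n.+1}) :
  p \in [pchar R] -> (0 < k)%N ->
  (eS (p ^ k) S)%:R = (ord0 \in S)%:R :> R.
Proof.
move=> hp k0; rewrite /eS natr_sum.
rewrite (eq_bigr (fun j => if j == ord0 then 1 else 0)).
  by rewrite sum_ind_r; case: (ord0 \in S).
move=> j _; rewrite natrX natrX (pcharf0 hp) expr0n.
have -> : (k == 0%N) = false by lia.
rewrite expr0n; case: (eqVneq j ord0) => [->|jn] //=.
move: jn; case: j => [[|j'] ?] //= _.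
Qed.

Lemma deriv_s (R : comNzRingType) (p k n i : nat) :
  p \in [pchar R] -> (0 < k)%N ->
  (s_nqi R n.+1 (p ^ k) i)^`() =
  \sum_(S : {set 'I_n.+1} | #|S| == i) (if ord0 \in S then 'X^((eS (p ^ k) S).-1) else 0).
Proof.
move=> hp k0; rewrite /s_nqi raddf_sum; apply: eq_bigr => S _.
change (deriv ('X^(eS (p ^ k) S) : {poly R}) = (if ord0 \in S then 'X^((eS (p ^ k) S).-1) else 0)).
rewrite derivXn -mulr_natr.
have hp' : p \in [pchar {poly R}] by rewrite pchar_poly.
rewrite (@natr_eS _ p k n S hp' k0).
by case: (ord0 \in S); rewrite ?mulr1 ?mulr0.
Qed.

Lemma eS_ge1 (n q : nat) (S : {set 'I_n.+1}) : ord0 \in S -> (0 < eS q S)%N.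
Proof.
move=> h; rewrite /eS (bigD1 ord0) //= expn0; lia.
Qed.

Lemma key (R : comNzRingType) (p k n i : nat) :
  prime p -> p \in [pchar R] -> (0 < k)%N ->
  (s_nqi R n.+1 (p ^ k) i) ^+ (p ^ k) - s_nqi R n.+1 (p ^ k) i =
  ('X^((p ^ k) ^ n.+1) - 'X) * (s_nqi R n.+1 (p ^ k) i)^`().
Proof.
move=> pp hp k0.
set q := (p ^ k)%N.
have q0 : (0 < q)%N by rewrite expn_gt0 prime_gt0.
have hq : [pchar {poly R}].-nat q.
  rewrite /q pnatX; apply/orP; left.
  rewrite pnatE //; by rewrite pchar_poly.
rewrite deriv_s // big_distrr /=.
rewrite {1}/s_nqi frob_sum //.
pose G (T : {set 'I_n.+1}) : {poly R} :=
  'X^(if ord0 \in T then (q ^ n.+1 + eS q T - 1)%N else eS q T).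
have -> : \sum_(S : {set 'I_n.+1} | #|S| == i) ('X^(\sum_(j in S) q ^ val j)%N) ^+ q
        = \sum_(T : {set 'I_n.+1} | #|T| == i) G T.
  rewrite [RHS](reindex_inj (imset_inj (@ordS_inj n.+1))) /=.
  apply: eq_big => [S|S _]; first by rewrite card_imset //; exact: (@ordS_inj n.+1).
  rewrite /G f_rot // -exprM mulnC //.
rewrite /s_nqi -sumrB; apply: eq_bigr => T _.
rewrite /G.
change (\sum_(j in T) q ^ val j)%N with (eS q T).
case: ifP => h0; last by rewrite subrr mulr0.
have e1 := @eS_ge1 n q T h0.
rewrite mulrBl -exprD -exprS prednK // -subn1 addnBA //.
Qed.

From mathcomp Require Import ring.
Lemma aux (R : comNzRingType) (G Ga Da Dm D Y G' c : R) :
  Ga * Da * Dm - G * (D * Dm) = Y * (G' * (D * Dm) + G * (Dm * c)) ->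
  (Ga * Da - G * D) * Dm = (Y * (G' * D + G * c)) * Dm.
Proof.
move=> H; transitivity (Ga * Da * Dm - G * (D * Dm)); first ring.
rewrite H; ring.
Qed.

Lemma mup0 (L : fieldType) (a : L) : mup a 0 = 0%N.
Proof. rewrite /mup; case: arg_maxnP => //= j _ _; case: j => [[|x] //]; move=> h; exfalso; move: h; by rewrite size_poly0 ltnS ltn0. Qed.

Theorem lemma3p8 (p k : nat) (L : closedFieldType) (n i : nat) (alpha : L) :
  prime p -> (0 < k)%N -> p \in [pchar L] ->
  (2 <= n)%N -> (1 <= i <= n)%N ->
  root (s_nqi L n (p ^ k) i) alpha ->
  coprime (mup alpha (s_nqi L n (p ^ k) i)) p ->
  alpha ^+ ((p ^ k) ^ n) = alpha.
Proof.
move=> pp k0 hp; case: n => [//|n] _ _.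
set s := s_nqi L n.+1 (p ^ k) i => hroot hcop.
set q := (p ^ k)%N.
have q0 : (0 < q)%N by rewrite expn_gt0 prime_gt0.
have s0 : s != 0.
  apply: contraTneq hcop => ->; rewrite mup0 /coprime gcd0n.
  by rewrite eq_sym; apply/negP => /eqP E; move: pp; rewrite -E.
set m := mup alpha s.
have m0 : (0 < m)%N by rewrite -XsubC_dvd // dvdp_XsubCl.
set D := 'X - alpha%:P.
have : D ^+ m %| s by rewrite -mup_geq.
case/dvdpP => g hs.
have ng : ~~ root g alpha.
  apply/negP; rewrite -dvdp_XsubCl => /dvdpP[g1 hg].
  have : D ^+ m.+1 %| s by rewrite hs hg -mulrA -exprS dvdp_mull.
  by rewrite -mup_geq // ltnn.
have Heq := @key L p k n i pp hp k0.
rewrite -/q -/s hs in Heq.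
have hcm : coprime m p by [].
move: m0 hs Heq hcm; case: m => [//|m'] _ hs Heq hcm.
rewrite derivM deriv_exp derivXsubC mul1r /= in Heq.
set a := (m'.+1 * q - m')%N.
have e1 : (g * D ^+ m'.+1) ^+ q = g ^+ q * D ^+ a * D ^+ m'.
  rewrite exprMn -exprM -mulrA -exprD subnK //.
  by rewrite (leq_trans (leqnSn _)) // leq_pmulr.
rewrite e1 exprS -mulr_natr in Heq.
set Y := 'X^(q ^ n.+1) - 'X in Heq.
have E := @aux _ _ _ _ _ _ _ _ _ Heq.
have Dm0 : D ^+ m' != 0 by rewrite expf_neq0 // polyXsubC_eq0.
have {}E := mulIf Dm0 E.
have := congr1 (fun P => P.[alpha]) E.
rewrite /= /Y /D !hornerE /= subrr !mulr0 expr0n.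
have -> : (a == 0%N) = false.
  by apply/negbTE; rewrite -lt0n subn_gt0 leq_pmulr.
rewrite mulr0 subrr add0r.
have hm : (m'.+1)%:R != 0 :> L.
  by rewrite -(dvdn_pcharf hp) -prime_coprime // coprime_sym hcm.
rewrite hornerMn hornerC => /esym/eqP.
rewrite mulf_eq0 subr_eq0 mulf_eq0 (negbTE (ng : g.[alpha] != 0)) (negbTE hm) orbF.
by rewrite orbF => /eqP.
Qed.
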